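(* Let $\mathcal{A}$ be a separating union-closed family with base set $[n]$ and height $h=4$, and let $\mathcal{B}=\{B_1,B_2,B_3\}$ be a choice of $\mathcal{B}(\mathcal{A})$ with $|\mathcal{B}|=3$. Suppose $|B|=n-1$, where $B=b(\mathcal{A}_{<n/2})$, and let $A \in \mathcal{A}_{<n/2} \setminus \mathcal{B}$. Then either $A = \bigcup_{i=1}^3 \mathrm{irr}_{\mathcal{B}}(B_i)$, or $A$ satisfies exactly one of the following three conditions: (i) $A \cap \mathrm{irr}_{\mathcal{B}}(B_1) = \emptyset$ and $(B_2 \cup B_3) \setminus (B_2 \cap B_3) \subseteq A$; (ii) $A \cap \mathrm{irr}_{\mathcal{B}}(B_2) = \emptyset$ and $(B_1 \cup B_3) \setminus (B_1 \cap B_3) \subseteq A$; (iii) $A \cap \mathrm{irr}_{\mathcal{B}}(B_3) = \emptyset$ and $(B_1 \cup B_2) \setminus (B_1 \cap B_2) \subseteq A$.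
   Context: A family of sets $\mathcal{A}$ is union-closed if it is a finite family of distinct finite sets with at least one nonempty member set, and $X,Y\in\mathcal{A}$ implies $X\cup Y\in\mathcal{A}$ (the empty set may be a member). For a family $\mathcal{F}$, $b(\mathcal{F})=\bigcup_{F\in\mathcal{F}}F$; the base set $b(\mathcal{A})$ is denoted $[n]=\{1,\dots,n\}$. $\mathcal{A}$ is separating if for any two distinct $x,y\in[n]$ there is $A\in\mathcal{A}$ containing exactly one of $x,y$. A chain in $\mathcal{A}$ is a subfamily any two distinct members of which are comparable under proper inclusion; the height $h$ of $\mathcal{A}$ is the maximum size of a chain in $\mathcal{A}$. For real $x\ge 0$, $\mathcal{A}_{<x}=\{A\in\mathcal{A} : |A|<x\}$. For $\mathcal{S}\subseteq\mathcal{A}$ and $S\in\mathcal{S}$, $\mathrm{irr}_{\mathcal{S}}(S)=\{s\in S : s\notin b(\mathcal{S}\setminus\{S\})\}$, and $\mathcal{S}$ is irredundant if $\mathrm{irr}_{\mathcal{S}}(S)\neq\emptyset$ for every $S\in\mathcal{S}$. With $B=b(\mathcal{A}_{<n/2})$, $\mathcal{B}(\mathcal{A})$ denotes any irredundant subfamily of $\mathcal{A}_{<n/2}$ of minimum size such that $b(\mathcal{B}(\mathcal{A}))=B$. *)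

(* Defs.v *)
From mathcomp Require Import all_boot.
Set Implicit Arguments. Unset Strict Implicit. Unset Printing Implicit Defensive.

(* Ground set [n] = {1,...,n} is represented by 'I_n = {0,...,n-1}. *)
Section Fam.
Variable n : nat.
Notation fam := {set {set 'I_n}}.

Definition bU (F : fam) : {set 'I_n} := \bigcup_(X in F) X.

Definition union_closed (F : fam) : Prop :=
  (exists2 X, X \in F & X != set0) /\
  (forall X Y, X \in F -> Y \in F -> X :|: Y \in F).

Definition has_base_set_n (F : fam) : Prop := bU F = [set: 'I_n].

Definition separating (F : fam) : Prop :=
  forall x y : 'I_n, x != y -> exists2 X, X \in F & (x \in X) != (y \in X).

Definition is_chain (C : fam) : bool :=
  [forall X in C, forall Y in C, (X != Y) ==> ((X \proper Y) || (Y \proper X))].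

Definition height (F : fam) : nat := \max_(C in powerset F | is_chain C) #|C|.

Definition fam_lt_half (F : fam) : fam := [set X in F | 2 * #|X| < n].

Definition irr (S : fam) (X : {set 'I_n}) : {set 'I_n} :=
  [set s in X | s \notin bU (S :\ X)].

Definition irredundant (S : fam) : Prop := forall X, X \in S -> irr S X != set0.

Definition is_B_choice (F Bf : fam) : Prop :=
  [/\ Bf \subset fam_lt_half F, irredundant Bf, bU Bf = bU (fam_lt_half F) &
      forall S : fam, S \subset fam_lt_half F -> irredundant S ->
        bU S = bU (fam_lt_half F) -> #|Bf| <= #|S| ].
End Fam.

(* Main.v *)
Require Import Defs.
From mathcomp Require Import all_boot.
From mathcomp Require Import zify.
Set Implicit Arguments. Unset Strict Implicit. Unset Printing Implicit Defensive.

Lemma chain5 (n : nat) (F : {set {set 'I_n}}) (X1 X2 X3 X4 X5 : {set 'I_n}) :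
  X1 \in F -> X2 \in F -> X3 \in F -> X4 \in F -> X5 \in F ->
  X1 \proper X2 -> X2 \proper X3 -> X3 \proper X4 -> X4 \proper X5 ->
  5 <= height F.
Proof.
move=> F1 F2 F3 F4 F5 p12 p23 p34 p45.
have p13 := proper_trans p12 p23. have p14 := proper_trans p13 p34.
have p15 := proper_trans p14 p45. have p24 := proper_trans p23 p34.
have p25 := proper_trans p24 p45. have p35 := proper_trans p34 p45.
have ne : forall X Y : {set 'I_n}, X \proper Y -> (X == Y) = false.
  by move=> X Y /properP [_ [x xY xX]]; apply/eqP => E; rewrite E xY in xX.
set C := [set X1; X2; X3; X4; X5].
have CP : (C \in powerset F) && is_chain C.
  apply/andP; split.
    rewrite inE; apply/subsetP => X; rewrite !inE -!orbA.
    by case/orP=> [/eqP->//|]; case/orP=> [/eqP->//|]; case/orP=> [/eqP->//|];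
       case/orP=> /eqP->.
  apply/forallP => X; apply/implyP => HX; apply/forallP => Y; apply/implyP => HY.
  apply/implyP => nXY.
  move: HX HY nXY; rewrite !inE -!orbA.
  by do 4? case/orP=> [/eqP->|]; try move/eqP->; do 4? case/orP=> [/eqP->|];
    try move/eqP->; rewrite ?eqxx //= ?p12 ?p13 ?p14 ?p15 ?p23 ?p24 ?p25 ?p34 ?p35 ?p45 ?orbT.
have u : uniq [:: X1; X2; X3; X4; X5].
  by rewrite /= !inE ?(ne _ _ p12) ?(ne _ _ p13) ?(ne _ _ p14) ?(ne _ _ p15) ?(ne _ _ p23)
    ?(ne _ _ p24) ?(ne _ _ p25) ?(ne _ _ p34) ?(ne _ _ p35) ?(ne _ _ p45).
have cC : 5 <= #|C|.
  rewrite -[5]/(size [:: X1; X2; X3; X4; X5]) -(card_uniqP u).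
  apply/subset_leq_card/subsetP => X; rewrite ?inE -?orbA. idtac.
  by do 4? case/orP=> [/eqP->|]; try move/eqP->; rewrite ?eqxx ?orbT /=.
apply: (leq_trans cC); rewrite /height.
exact: (@leq_bigmax_cond _ (fun C => (C \in powerset F) && is_chain C) (fun C => #|C|) C CP).
Qed.

Lemma setT_in (n : nat) (F : {set {set 'I_n}}) :
  union_closed F -> has_base_set_n F -> [set: 'I_n] \in F.
Proof.
move=> [[X0 X0F _] UC] hB.
case: (arg_maxnP (fun X : {set 'I_n} => #|X|) X0F) => M MF Mmax.
have sub : forall Y, Y \in F -> Y \subset M.
  move=> Y YF.
  have E : M == M :|: Y by rewrite eqEcard subsetUl; exact: (Mmax _ (UC _ _ MF YF)).
  by rewrite (eqP E) subsetUr.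
suff -> : [set: 'I_n] = M by [].
apply/eqP; rewrite eqEsubset subsetT andbT -hB /bU.
by apply/bigcupsP => Y; apply: sub.
Qed.

Ltac bsub := apply/subsetP => ?; rewrite !inE;
  (repeat match goal with |- context[?x \in ?S] => case: (x \in S) end); done.

Lemma key (n : nat) (F : {set {set 'I_n}}) (Bi Bj Bk A U : {set 'I_n}) :
  height F = 4 -> (forall X Y, X \in F -> Y \in F -> X :|: Y \in F) ->
  [set: 'I_n] \in F -> Bi \in F -> Bj \in F -> Bk \in F -> A \in F ->
  U = Bi :|: Bj :|: Bk -> U \proper [set: 'I_n] -> A \subset U -> A != Bi ->
  (exists y, [/\ y \in Bj, y \notin Bi & y \notin Bk]) ->
  (exists z, [/\ z \in Bk, z \notin Bi & z \notin Bj]) ->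
  [/\ ~~ (A \subset Bi),
      (Bj \subset A :|: Bi) || (U \subset A :|: Bi :|: Bj) &
      (A \subset Bi :|: Bj) || (U \subset A :|: Bi :|: Bj)].
Proof.
move=> hh UC TF BiF BjF BkF AF hU UT AU nAB [y [yj yi yk]] [z [zk zi zj]].
have UF : U \in F by rewrite hU; apply: (UC) => //; apply: (UC).
have no4 : forall X1 X2 X3, X1 \in F -> X2 \in F -> X3 \in F ->
   X1 \proper X2 -> X2 \proper X3 -> X3 \proper U -> False.
  move=> X1 X2 X3 F1 F2 F3 p1 p2 p3.
  by have := chain5 F1 F2 F3 UF TF p1 p2 p3 UT; rewrite hh.
have BijF : Bi :|: Bj \in F by apply: (UC).
have AijF : A :|: Bi :|: Bj \in F by apply: (UC) => //; apply: (UC).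
have AiF : A :|: Bi \in F by apply: (UC).
have p1 : Bi \proper Bi :|: Bj.
  apply/properP; split; first exact: subsetUl.
  by exists y; rewrite ?inE ?yj ?orbT.
have AijU : A :|: Bi :|: Bj \subset U.
  by rewrite !subUset AU /=; apply/andP; split; rewrite hU; bsub.
have nAi : ~~ (A \subset Bi).
  apply/negP => sAB.
  apply: (no4 _ _ _ AF BiF BijF) => //.
    by rewrite properEneq nAB sAB.
  apply/properP; split; first by rewrite hU; bsub.
  by exists z; rewrite ?hU !inE ?zk ?orbT // (negbTE zi) (negbTE zj).
split => //.
  case: (boolP (Bj \subset A :|: Bi)) => //= h1.
  case: (boolP (U \subset A :|: Bi :|: Bj)) => //= h2.
  exfalso; apply: (no4 _ _ _ BiF AiF AijF).
  - apply/properP; split; first exact: subsetUr.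
    by case/subsetPn: nAi => x xA xB; exists x; rewrite // inE xA.
  - apply/properP; split; first exact: subsetUl.
    by case/subsetPn: h1 => x xA xB; exists x; rewrite // inE xA orbT.
  - by rewrite properE AijU h2.
case: (boolP (A \subset Bi :|: Bj)) => //= h1.
case: (boolP (U \subset A :|: Bi :|: Bj)) => //= h2.
exfalso; apply: (no4 _ _ _ BiF BijF AijF) => //.
  apply/properP; split; first by bsub.
  case/subsetPn: h1 => x xA xB; exists x => //.
  by rewrite !inE xA.
by rewrite properE AijU h2.
Qed.

Ltac bcase := repeat match goal with |- context[?x \in ?S] => case: (x \in S) end; by [].

Lemma card3 (T : finType) (a b c : T) :
  #|[set a; b; c]| = 3 -> [/\ a != b, a != c & b != c].
Proof.
have -> : [set a; b; c] = a |: (b |: [set c]) by apply/setP => x; rewrite !inE orbA.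
rewrite !cardsU1 cards1 !inE.
by move=> h; split; apply/eqP => E; subst; move: h; rewrite ?eqxx /=;
  repeat match goal with |- context[?x == ?y] => case: (x == y) end.
Qed.

Lemma bU3 n (a b c : {set 'I_n}) : bU [set a; b; c] = a :|: b :|: c.
Proof.
apply/setP => x; apply/bigcupP/idP.
  by case=> X; rewrite !inE -!orbA => /or3P [] /eqP -> ->; rewrite ?orbT.
rewrite !inE -!orbA => /or3P [] h.
- by exists a; rewrite // !inE eqxx.
- by exists b; rewrite // !inE eqxx ?orbT.
- by exists c; rewrite // !inE eqxx ?orbT.
Qed.

Lemma irr3 n (a b c : {set 'I_n}) : a != b -> a != c ->
  irr [set a; b; c] a = a :\: (b :|: c).
Proof.
move=> nab nac; apply/setP => x; rewrite /irr !inE andbC; congr (~~ _ && _).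
apply/bigcupP/idP.
  case=> X; rewrite !inE -!orbA => /andP [nX /or3P []] /eqP E; subst X.
  - by rewrite eqxx in nX.
  - by move=> ->.
  - by move=> ->; rewrite orbT.
case/orP => h.
- by exists b; rewrite // !inE eqxx eq_sym nab ?orbT.
- by exists c; rewrite // !inE eqxx eq_sym nac ?orbT.
Qed.

Ltac eqcase := repeat match goal with |- context[?x == ?y] => case: (x == y) end; by [].

Unset Implicit Arguments.
Theorem propositionI (n : nat) (F : {set {set 'I_n}})
  (B1 B2 B3 A : {set 'I_n}) :
  union_closed F -> has_base_set_n F -> separating F -> height F = 4 ->
  is_B_choice F [set B1; B2; B3] -> #|[set B1; B2; B3]| = 3 ->
  #|bU (fam_lt_half F)| = n - 1 ->
  A \in fam_lt_half F -> A \notin [set B1; B2; B3] ->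
  let Bf := [set B1; B2; B3] in
  let c1 := (A :&: irr Bf B1 == set0) && ((B2 :|: B3) :\: (B2 :&: B3) \subset A) in
  let c2 := (A :&: irr Bf B2 == set0) && ((B1 :|: B3) :\: (B1 :&: B3) \subset A) in
  let c3 := (A :&: irr Bf B3 == set0) && ((B1 :|: B2) :\: (B1 :&: B2) \subset A) in
  A = irr Bf B1 :|: irr Bf B2 :|: irr Bf B3 \/
  [|| [&& c1, ~~ c2 & ~~ c3], [&& ~~ c1, c2 & ~~ c3] | [&& ~~ c1, ~~ c2 & c3]].
Proof.
move=> hUC hBase _ hh hB hc3 hcard hA hAnot; cbv zeta.
have TF := setT_in hUC hBase.
have UC := hUC.2.
case: (card3 hc3) => n12 n13 n23.
case: hB => sub irrd eqbU _.
have e2 : [set B1; B2; B3] = [set B2; B1; B3] by apply/setP => X; rewrite !inE; eqcase.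
have e3 : [set B1; B2; B3] = [set B3; B1; B2] by apply/setP => X; rewrite !inE; eqcase.
have ir1 : irr [set B1; B2; B3] B1 = B1 :\: (B2 :|: B3) by rewrite irr3.
have ir2 : irr [set B1; B2; B3] B2 = B2 :\: (B1 :|: B3) by rewrite e2 irr3 // eq_sym.
have ir3 : irr [set B1; B2; B3] B3 = B3 :\: (B1 :|: B2) by rewrite e3 irr3 // eq_sym.
have [y1 y1B1 y1n] : exists2 y, y \in B1 & y \notin B2 :|: B3.
  have /set0Pn [y] : irr [set B1; B2; B3] B1 != set0 by apply: irrd; rewrite !inE eqxx ?orbT.
  by rewrite ir1 inE => /andP [h1 h2]; exists y.
have [y2 y2B2 y2n] : exists2 y, y \in B2 & y \notin B1 :|: B3.
  have /set0Pn [y] : irr [set B1; B2; B3] B2 != set0 by apply: irrd; rewrite !inE eqxx ?orbT.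
  by rewrite ir2 inE => /andP [h1 h2]; exists y.
have [y3 y3B3 y3n] : exists2 y, y \in B3 & y \notin B1 :|: B2.
  have /set0Pn [y] : irr [set B1; B2; B3] B3 != set0 by apply: irrd; rewrite !inE eqxx ?orbT.
  by rewrite ir3 inE => /andP [h1 h2]; exists y.
rewrite ir1 ir2 ir3.
have inB : forall X, X \in [set B1; B2; B3] -> (X \in F) && (2 * #|X| < n).
  by move=> X /(subsetP sub); rewrite inE.
have /andP [B1F B1s] : (B1 \in F) && (2 * #|B1| < n) by apply: inB; rewrite !inE eqxx ?orbT.
have /andP [B2F B2s] : (B2 \in F) && (2 * #|B2| < n) by apply: inB; rewrite !inE eqxx ?orbT.
have /andP [B3F B3s] : (B3 \in F) && (2 * #|B3| < n) by apply: inB; rewrite !inE eqxx ?orbT.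
have /andP [AF As] : (A \in F) && (2 * #|A| < n) by move: hA; rewrite inE.
set U := B1 :|: B2 :|: B3.
have eU : bU (fam_lt_half F) = U by rewrite -eqbU bU3.
have cU : #|U| = n - 1 by rewrite -eU.
have AU : A \subset U by rewrite -eU; exact: (bigcup_sup _ hA).
have UT : U \proper [set: 'I_n] by rewrite properEcard subsetT cardsT card_ord cU ltn_subrL /=; exact: leq_ltn_trans (leq0n _) As.
move: hAnot; rewrite !inE !negb_or => /andP [/andP [nA1 nA2] nA3].
move: y1n y2n y3n; rewrite !inE !negb_or => /andP [y12 y13] /andP [y21 y23] /andP [y31 y32].
have hU213 : U = B2 :|: B1 :|: B3 by apply/setP => x; rewrite /U !inE; bcase.
have hU132 : U = B1 :|: B3 :|: B2 by apply/setP => x; rewrite /U !inE; bcase.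
have hU312 : U = B3 :|: B1 :|: B2 by apply/setP => x; rewrite /U !inE; bcase.
have hU231 : U = B2 :|: B3 :|: B1 by apply/setP => x; rewrite /U !inE; bcase.
have hU321 : U = B3 :|: B2 :|: B1 by apply/setP => x; rewrite /U !inE; bcase.
have [_ b12 c12] := key hh UC TF B1F B2F B3F AF (erefl U) UT AU nA1
  (ex_intro _ y2 (And3 y2B2 y21 y23)) (ex_intro _ y3 (And3 y3B3 y31 y32)).
have [_ b21 _] := key hh UC TF B2F B1F B3F AF hU213 UT AU nA2
  (ex_intro _ y1 (And3 y1B1 y12 y13)) (ex_intro _ y3 (And3 y3B3 y32 y31)).
have [_ b13 c13] := key hh UC TF B1F B3F B2F AF hU132 UT AU nA1
  (ex_intro _ y3 (And3 y3B3 y31 y32)) (ex_intro _ y2 (And3 y2B2 y21 y23)).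
have [_ b31 _] := key hh UC TF B3F B1F B2F AF hU312 UT AU nA3
  (ex_intro _ y1 (And3 y1B1 y13 y12)) (ex_intro _ y2 (And3 y2B2 y23 y21)).
have [_ b23 c23] := key hh UC TF B2F B3F B1F AF hU231 UT AU nA2
  (ex_intro _ y3 (And3 y3B3 y32 y31)) (ex_intro _ y1 (And3 y1B1 y12 y13)).
have [_ b32 _] := key hh UC TF B3F B2F B1F AF hU321 UT AU nA3
  (ex_intro _ y2 (And3 y2B2 y23 y21)) (ex_intro _ y1 (And3 y1B1 y13 y12)).
rewrite setUAC in b21; rewrite setUAC in b31; rewrite setUAC in b32.
case: (boolP (U \subset A :|: B1 :|: B2)) => s3; last first.
  rewrite (negbTE s3) !orbF in b12 b21 c12.
  right; apply/or3P; apply: Or33; apply/and3P; split.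
  - rewrite negb_and; apply/orP; left; apply/set0Pn; exists y1.
    rewrite !inE y1B1 (negbTE y12) (negbTE y13) /= andbT.
    by move: (subsetP b21 y1 y1B1); rewrite inE (negbTE y12) orbF.
  - rewrite negb_and; apply/orP; left; apply/set0Pn; exists y2.
    rewrite !inE y2B2 (negbTE y21) (negbTE y23) /= andbT.
    by move: (subsetP b12 y2 y2B2); rewrite inE (negbTE y21) orbF.
  - apply/andP; split.
      apply/eqP/setP => x; rewrite !inE; move/implyP: (subsetP c12 x); rewrite !inE; bcase.
    apply/subsetP => x; rewrite !inE; move/implyP: (subsetP b12 x);
      move/implyP: (subsetP b21 x); rewrite !inE; bcase.
case: (boolP (U \subset A :|: B1 :|: B3)) => s2; last first.
  rewrite (negbTE s2) !orbF in b13 b31 c13.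
  right; apply/or3P; apply: Or32; apply/and3P; split.
  - rewrite negb_and; apply/orP; left; apply/set0Pn; exists y1.
    rewrite !inE y1B1 (negbTE y12) (negbTE y13) /= andbT.
    by move: (subsetP b31 y1 y1B1); rewrite inE (negbTE y13) orbF.
  - apply/andP; split.
      apply/eqP/setP => x; rewrite !inE; move/implyP: (subsetP c13 x); rewrite !inE; bcase.
    apply/subsetP => x; rewrite !inE; move/implyP: (subsetP b13 x);
      move/implyP: (subsetP b31 x); rewrite !inE; bcase.
  - rewrite negb_and; apply/orP; left; apply/set0Pn; exists y3.
    rewrite !inE y3B3 (negbTE y31) (negbTE y32) /= andbT.
    by move: (subsetP b13 y3 y3B3); rewrite inE (negbTE y31) orbF.
case: (boolP (U \subset A :|: B2 :|: B3)) => s1; last first.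
  rewrite (negbTE s1) !orbF in b23 b32 c23.
  right; apply/or3P; apply: Or31; apply/and3P; split.
  - apply/andP; split.
      apply/eqP/setP => x; rewrite !inE; move/implyP: (subsetP c23 x); rewrite !inE; bcase.
    apply/subsetP => x; rewrite !inE; move/implyP: (subsetP b23 x);
      move/implyP: (subsetP b32 x); rewrite !inE; bcase.
  - rewrite negb_and; apply/orP; left; apply/set0Pn; exists y2.
    rewrite !inE y2B2 (negbTE y21) (negbTE y23) /= andbT.
    by move: (subsetP b32 y2 y2B2); rewrite inE (negbTE y23) orbF.
  - rewrite negb_and; apply/orP; left; apply/set0Pn; exists y3.
    rewrite !inE y3B3 (negbTE y31) (negbTE y32) /= andbT.
    by move: (subsetP b23 y3 y3B3); rewrite inE (negbTE y32) orbF.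
left.
set I := B1 :\: (B2 :|: B3) :|: B2 :\: (B1 :|: B3) :|: B3 :\: (B1 :|: B2).
have sI : I \subset A.
  apply/subsetP => x; rewrite /I !inE; move/implyP: (subsetP s1 x);
    move/implyP: (subsetP s2 x); move/implyP: (subsetP s3 x); rewrite /U !inE; bcase.
apply/eqP; rewrite eq_sym eqEproper sI /=; apply/negP => pI.
set M := (B1 :&: B2) :|: ((B1 :|: B2) :&: B3).
have eI : I = U :\: M by apply/setP => x; rewrite /I /U /M !inE; bcase.
have eM : U :&: M = M by apply/setP => x; rewrite /U /M !inE; bcase.
have h0 := cardsID M U; rewrite eM -eI in h0.
have h1 := cardsUI B1 B2.
have h2 := cardsUI (B1 :|: B2) B3; rewrite -/U in h2.
have h3 := cardsUI (B1 :&: B2) ((B1 :|: B2) :&: B3); rewrite -/M in h3.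
have h4 := proper_card pI.
clear -h0 h1 h2 h3 h4 As B1s B2s B3s cU.
lia.
Qed.
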